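(* For every subset $J'\subseteq J$ and every start time $t\ge 0$, there exists a partial potential schedule of $J'$ starting at $t$.
   Context: $J$ is a finite set of jobs; job $j$ has processing time $p_j>0$ and weight $w_j>0$. For $J'\subseteq J$ and $t\ge0$, a partial schedule of $J'$ starting at $t$ is an ordering of $J'$ processed consecutively without idle time from time $t$; job $j$ has (absolute) start time $t_j$. For $s\ge 0$, $\varphi_j(s)=\frac{w_j}{p_j(p_j+s)}$. For jobs $i,j$ with $w_ip_j\neq w_jp_i$, $t^*_{ij}=\frac{w_jp_i^2-w_ip_j^2}{w_ip_j-w_jp_i}$ (the unique real $s$ with $\varphi_i(s)=\varphi_j(s)$). Dominance rule: for an interval $I\subseteq[0,\infty)$, the relation ''$i$ dominates $j$ on $I$'' is violated by a (partial) schedule if $j$ is processed before $i$ and both $t_j\in I$ and $t_i-p_j\in I$. The rule contains, for each pair of distinct jobs $i,j$ with $(p_i,w_i)\ne(p_j,w_j)$: (1) if $\varphi_i(s)\ge\varphi_j(s)$ for all $s\ge 0$, ''$i$ dominates $j$ on $[0,\infty)$''; (2) otherwise, if $\varphi_j(s)\ge\varphi_i(s)$ for all $s\ge0$, ''$j$ dominates $i$ on $[0,\infty)$''; (3) otherwise, labelling the pair so that $\varphi_i(0)>\varphi_j(0)$, $t^*_{ij}>0$ is defined and the rule contains ''$i$ dominates $j$ on $[0,t^*_{ij})$'' and ''$j$ dominates $i$ on $[t^*_{ij},\infty)$''. A partial schedule of $J'$ is a partial potential schedule if it violates no relation of the rule between two jobs of $J'$. *)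

(* Defs.v *)
From HB Require Import structures.
From mathcomp Require Import all_boot all_order all_algebra.
Set Implicit Arguments. Unset Strict Implicit. Unset Printing Implicit Defensive.
Import Order.TTheory GRing.Theory Num.Theory.
Local Open Scope ring_scope.

Section Sched.
Variables (R : realFieldType) (J : finType) (p w : J -> R).

Definition phi (j : J) (s : R) : R := w j / (p j * (p j + s)).

Definition tstar (i j : J) : R :=
  (w j * p i ^+ 2 - w i * p j ^+ 2) / (w i * p j - w j * p i).

Definition phi_ge (i j : J) : Prop := forall s : R, 0 <= s -> phi j s <= phi i s.

(* rule_rel a b I  <->  the dominance rule contains "a dominates b on I".
   Each constructor corresponds to a case of the rule, for one of the two
   labellings of the unordered pair {a, b}. *)
Inductive rule_rel (a b : J) : (R -> Prop) -> Prop :=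
| rule_case1 : a != b -> (p a, w a) != (p b, w b) -> phi_ge a b ->
    rule_rel a b (fun s => 0 <= s)
| rule_case2 : a != b -> (p a, w a) != (p b, w b) -> ~ phi_ge b a -> phi_ge a b ->
    rule_rel a b (fun s => 0 <= s)
| rule_case3a : a != b -> (p a, w a) != (p b, w b) -> ~ phi_ge a b -> ~ phi_ge b a ->
    phi b 0 < phi a 0 -> rule_rel a b (fun s => 0 <= s /\ s < tstar a b)
| rule_case3b : a != b -> (p a, w a) != (p b, w b) -> ~ phi_ge a b -> ~ phi_ge b a ->
    phi a 0 < phi b 0 -> rule_rel a b (fun s => tstar b a <= s).

Definition partial_schedule (J' : {set J}) (s : seq J) : Prop :=
  uniq s /\ (forall j, (j \in s) = (j \in J')).

Definition start_time (s : seq J) (t : R) (j : J) : R :=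
  t + \sum_(k <- take (index j s) s) p k.

Definition violates (s : seq J) (t : R) (i j : J) (I : R -> Prop) : Prop :=
  [/\ i \in s, j \in s, (index j s < index i s)%N,
      I (start_time s t j) & I (start_time s t i - p j)].

Definition potential_schedule (J' : {set J}) (s : seq J) (t : R) : Prop :=
  partial_schedule J' s /\
  (forall (i j : J) (I : R -> Prop), rule_rel i j I -> ~ violates s t i j I).

End Sched.

(* Main.v *)
Require Import Defs.
From HB Require Import structures.
From mathcomp Require Import all_boot all_order all_algebra.
From mathcomp Require Import ring lra.
Import Order.TTheory GRing.Theory Num.Theory.
Local Open Scope ring_scope.

Section Aux.
Variables (R : realFieldType) (J : finType) (p w : J -> R).
Hypothesis hp : forall j, 0 < p j.
Hypothesis hw : forall j, 0 < w j.

Lemma phi_le i j s : 0 <= s ->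
  (phi p w i s <= phi p w j s) = (w i * (p j * (p j + s)) <= w j * (p i * (p i + s))).
Proof.
move=> hs; have hi := hp i; have hj := hp j.
have Di : 0 < p i * (p i + s) by apply: mulr_gt0 => //; lra.
have Dj : 0 < p j * (p j + s) by apply: mulr_gt0 => //; lra.
by rewrite /phi ler_pdivlMr // mulrAC ler_pdivrMr.
Qed.

Lemma phi_lt i j s : 0 <= s ->
  (phi p w i s < phi p w j s) = (w i * (p j * (p j + s)) < w j * (p i * (p i + s))).
Proof.
move=> hs; have hi := hp i; have hj := hp j.
have Di : 0 < p i * (p i + s) by apply: mulr_gt0 => //; lra.
have Dj : 0 < p j * (p j + s) by apply: mulr_gt0 => //; lra.
by rewrite /phi ltr_pdivlMr // mulrAC ltr_pdivrMr.
Qed.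

Definition good t (j i : J) : bool :=
  (phi p w i t < phi p w j t) || ((phi p w i t == phi p w j t) && (p i <= p j)).

Lemma good_refl t j : good t j j.
Proof. by rewrite /good eqxx lexx orbT. Qed.

Lemma good_trans t a b c : good t a b -> good t b c -> good t a c.
Proof.
rewrite /good => /orP[h1|/andP[/eqP e1 h1]] /orP[h2|/andP[/eqP e2 h2]].
- by rewrite (lt_trans h2 h1).
- by rewrite e2 h1.
- by rewrite -e1 h2.
- by rewrite e2 e1 eqxx (le_trans h2 h1) orbT.
Qed.

Lemma good_total t a b : ~~ good t a b -> good t b a.
Proof.
rewrite /good negb_or negb_and -leNgt => /andP[h1 h2].
rewrite le_eqVlt in h1; case/orP: h1 => [/eqP e|->//].
rewrite e eqxx /= in h2 *; rewrite ltxx /= ltW //.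
by rewrite ltNge.
Qed.

Lemma exists_good t (s : seq J) : s != [::] ->
  exists2 j, j \in s & forall i, i \in s -> good t j i.
Proof.
elim: s => // x s IH _.
case: s IH => [|y s] IH.
  by exists x; rewrite ?mem_head // => i; rewrite inE => /eqP->; apply: good_refl.
have [j js hj] := IH isT.
case g: (good t j x).
  exists j; first by rewrite inE js orbT.
  by move=> i; rewrite inE => /orP[/eqP->|]; [|apply: hj].
exists x; first by rewrite mem_head.
have gx := good_total _ _ _ (negbT g).
move=> i; rewrite inE => /orP[/eqP->|/hj]; first by apply: good_refl.
by move=> hji; apply: (good_trans _ _ _ _ gx hji).
Qed.

Lemma key (t : R) i j (I : R -> Prop) : 0 <= t -> good t j i -> rule_rel p w i j I -> I t -> False.
Proof.
move=> ht g rr It.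
have hpi := hp i; have hpj := hp j; have hwi := hw i; have hwj := hw j.
have hpit : 0 < p i + t by lra.
have hpjt : 0 < p j + t by lra.
set X := w i * (p j * (p j + t)); set Y := w j * (p i * (p i + t)).
have gXY : X < Y \/ (X = Y /\ p i <= p j).
  move: g; rewrite /good => /orP[|/andP[/eqP e h]].
    by rewrite phi_lt // => h; left; rewrite /X /Y; lra.
  right; split => //; apply/eqP; rewrite eq_le -!phi_le // e lexx //.
case: rr It => {I}.
- move=> _ /negP ne ge _; apply: ne; apply/eqP.
  have h0 := ge t ht; rewrite phi_le // in h0.
  have h1 := ge (t + 1) (ltW (ltr_pwDr ltr01 ht) : 0 <= t + 1).
  rewrite phi_le in h1; last lra.
  case: gXY => [h|[eXY pij]]; first by exfalso; rewrite /X /Y in h; lra.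
  have B : w j * p i <= w i * p j by rewrite /X /Y in h0 eXY; nra.
  have pe : p i = p j.
    apply/eqP; rewrite eq_le pij /=.
    rewrite /X /Y in eXY.
    have h2 : w j * p i * (p j + t) <= w i * p j * (p j + t) by rewrite ler_pM2r.
    have c : 0 < w j * p i by apply: mulr_gt0.
    rewrite -(ler_pM2l c).
    have -> : w j * p i * p j = w j * p i * (p j + t) - w j * p i * t by ring.
    have -> : w j * p i * p i = w j * (p i * (p i + t)) - w j * p i * t by ring.
    rewrite -eXY; lra.
  rewrite /X /Y pe in eXY.
  have we : w i = w j.
    apply: (mulIf (_ : p j * (p j + t) != 0)); first by apply/lt0r_neq0/mulr_gt0.
    exact: eXY.
  by rewrite pe we.
- move=> _ /negP ne _ ge _; apply: ne; apply/eqP.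
  have h0 := ge t ht; rewrite phi_le // in h0.
  have h1 := ge (t + 1) (ltW (ltr_pwDr ltr01 ht) : 0 <= t + 1).
  rewrite phi_le in h1; last lra.
  case: gXY => [h|[eXY pij]]; first by exfalso; rewrite /X /Y in h; lra.
  have B : w j * p i <= w i * p j by rewrite /X /Y in h0 eXY; nra.
  have pe : p i = p j.
    apply/eqP; rewrite eq_le pij /=.
    rewrite /X /Y in eXY.
    have h2 : w j * p i * (p j + t) <= w i * p j * (p j + t) by rewrite ler_pM2r.
    have c : 0 < w j * p i by apply: mulr_gt0.
    rewrite -(ler_pM2l c).
    have -> : w j * p i * p j = w j * p i * (p j + t) - w j * p i * t by ring.
    have -> : w j * p i * p i = w j * (p i * (p i + t)) - w j * p i * t by ring.
    rewrite -eXY; lra.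
  rewrite /X /Y pe in eXY.
  have we : w i = w j.
    apply: (mulIf (_ : p j * (p j + t) != 0)); first by apply/lt0r_neq0/mulr_gt0.
    exact: eXY.
  by rewrite pe we.
- move=> _ _ nge _ h0 [_ tlt].
  rewrite phi_lt // !addr0 in h0.
  have Bn : w i * p j - w j * p i < 0.
    rewrite ltNge; apply/negP => Bp; apply: nge => s hs.
    rewrite phi_le //.
    have : 0 <= s * (w i * p j - w j * p i) by apply: mulr_ge0.
    nra.
  rewrite /tstar ltr_ndivlMr // !expr2 in tlt.
  case: gXY => [h|[h _]]; rewrite /X /Y in h; nra.
- move=> _ _ _ nge h0 tle.
  rewrite phi_lt // !addr0 in h0.
  have Bp : 0 < w i * p j - w j * p i.
    rewrite ltNge; apply/negP => Bn; apply: nge => s hs.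
    rewrite phi_le //.
    have : s * (w i * p j - w j * p i) <= 0 by apply: mulr_ge0_le0.
    nra.
  rewrite /tstar ler_ndivrMr ?expr2 in tle; last lra.
  case: gXY => [h|[eXY pij]]; first by rewrite /X /Y in h; nra.
  have : w j * p i * (p i + t) <= w j * p i * (p j + t).
    by rewrite ler_pM2l ?mulr_gt0 // lerD2r.
  have : w j * p i * (p j + t) < w i * p j * (p j + t) by rewrite ltr_pM2r // -subr_gt0.
  rewrite /X /Y in eXY; nra.
Qed.

Lemma start_cons (s : seq J) t j x : j != x ->
  start_time p (j :: s) t x = start_time p s (t + p j) x.
Proof.
move=> ne; rewrite /start_time /= (negPf ne) /= big_cons addrA //.
Qed.

Lemma main n : forall (J' : {set J}) (t : R), #|J'| = n -> 0 <= t ->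
  exists s : seq J, potential_schedule p w J' s t.
Proof.
elim: n => [|n IH] J' t hc ht.
  exists [::]; split.
    split => // j; move/eqP: hc; rewrite cards_eq0 => /eqP->; by rewrite inE.
  by move=> i j I _ [].
have ne : enum J' != [::].
  by apply/eqP => e; move: hc; rewrite cardE e.
have [j jin hj] := exists_good t _ ne.
rewrite mem_enum in jin.
have hc' : #|J' :\ j| = n by move: hc; rewrite (cardsD1 j) jin add1n => -[].
have ht' : 0 <= t + p j by have := hp j; lra.
have [s' [[us' ms'] nv]] := IH _ _ hc' ht'.
exists (j :: s'); split.
  split; first by rewrite /= us' ms' !inE eqxx.
  move=> k; rewrite inE ms' in_setD1.
  by case: (eqVneq k j) => [->|] //=; rewrite jin.
move=> a b I rr [ain bin lt Ib Ia].
case: (eqVneq j b) => [eb|nb].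
  subst b.
  have aj : a \in J' by move: ain; rewrite inE ms' in_setD1 => /orP[/eqP->|/andP[]].
  apply: (key t a j I ht (hj a _) rr); first by rewrite mem_enum.
  by move: Ib; rewrite /start_time /= eqxx /= big_nil addr0.
have na : j != a by apply/eqP => e; move: lt; rewrite -e /= eqxx.
apply: (nv a b I rr); split.
- by move: ain; rewrite inE eq_sym (negPf na).
- by move: bin; rewrite inE eq_sym (negPf nb).
- by move: lt; rewrite /= (negPf na) (negPf nb).
- by rewrite -start_cons.
- by rewrite -start_cons.
Qed.

End Aux.

Theorem lemma6 (R : realFieldType) (J : finType) (p w : J -> R)
  (hp : forall j, 0 < p j) (hw : forall j, 0 < w j)
  (J' : {set J}) (t : R) (ht : 0 <= t) :
  exists s : seq J, potential_schedule p w J' s t.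
Proof. exact: (@main R J p w hp hw _ J' t (erefl _) ht). Qed.
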